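(* Let $\mathcal X$ be a subset of the nonzero elements of a field and let $f:\mathcal X\to\mathcal X$ be such that the map $$S:\mathcal X\times\mathcal X\to\mathcal X\times\mathcal X,\qquad S(x,y)=(u,v)=\Big(x\,\frac{f(y)}{f(xy)},\;xy\Big)$$ is well defined, and suppose $f(u)f(v)=f(x)$ for all $x,y\in\mathcal X$, where $(u,v)=S(x,y)$. Then $S$ is a pentagon map.
   Context: For a set $Y$ and $S:Y\times Y\to Y\times Y$, define on $Y^3$: $S_{12}=S\times\mathrm{id}_Y$, $S_{23}=\mathrm{id}_Y\times S$, $S_{13}(y_1,y_2,y_3)=(p,y_2,q)$ with $(p,q)=S(y_1,y_3)$. $S$ is a pentagon map if $S_{12}\circ S_{13}\circ S_{23}=S_{23}\circ S_{12}$ (rightmost applied first). *)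

(* Defs.v *)
From HB Require Import structures.
From mathcomp Require Import all_boot all_order all_algebra.
Set Implicit Arguments. Unset Strict Implicit. Unset Printing Implicit Defensive.
Import GRing.Theory.
Local Open Scope ring_scope.

Definition S12 {Y : Type} (S : Y * Y -> Y * Y) (t : Y * Y * Y) : Y * Y * Y :=
  let: (y1, y2, y3) := t in let: (p, q) := S (y1, y2) in (p, q, y3).
Definition S23 {Y : Type} (S : Y * Y -> Y * Y) (t : Y * Y * Y) : Y * Y * Y :=
  let: (y1, y2, y3) := t in let: (p, q) := S (y2, y3) in (y1, p, q).
Definition S13 {Y : Type} (S : Y * Y -> Y * Y) (t : Y * Y * Y) : Y * Y * Y :=
  let: (y1, y2, y3) := t in let: (p, q) := S (y1, y3) in (p, y2, q).

Definition pentagon_map {Y : Type} (S : Y * Y -> Y * Y) : Prop :=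
  forall t : Y * Y * Y, S12 S (S13 S (S23 S t)) = S23 S (S12 S t).

(* Main.v *)
Require Import Defs.
From HB Require Import structures.
From mathcomp Require Import all_boot all_order all_algebra.
From mathcomp Require Import ring.
Import GRing.Theory.
Local Open Scope ring_scope.

Theorem mainTheorem3 (K : fieldType) (X : pred K) (f : K -> K)
  (hX0 : forall x, x \in X -> x != 0)
  (hfX : forall x, x \in X -> f x \in X)
  (hwd : forall x y, x \in X -> y \in X ->
           x * (f y / f (x * y)) \in X /\ x * y \in X)
  (hf : forall x y, x \in X -> y \in X ->
           f (x * (f y / f (x * y))) * f (x * y) = f x)
  (S : {x : K | x \in X} * {x : K | x \in X} ->
       {x : K | x \in X} * {x : K | x \in X})
  (hS : forall a b : {x : K | x \in X},
          sval (S (a, b)).1 = sval a * (f (sval b) / f (sval a * sval b)) /\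
          sval (S (a, b)).2 = sval a * sval b) :
  pentagon_map S.
Proof.
have nz : forall x, x \in X -> f x != 0 by move=> x hx; apply: hX0; apply: hfX.
move=> [[x y] z]; rewrite /S12 /S13 /S23.
case E1: (S (y, z)) => [p1 q1]; have [h11 h12] := hS y z; rewrite E1 /= in h11 h12.
case E2: (S (x, q1)) => [p2 q2]; have [h21 h22] := hS x q1; rewrite E2 /= in h21 h22.
case E3: (S (p2, p1)) => [p3 q3]; have [h31 h32] := hS p2 p1; rewrite E3 /= in h31 h32.
case E4: (S (x, y)) => [p4 q4]; have [h41 h42] := hS x y; rewrite E4 /= in h41 h42.
case E5: (S (q4, z)) => [p5 q5]; have [h51 h52] := hS q4 z; rewrite E5 /= in h51 h52.
have eq2 : q2 = q5 by apply: val_inj => /=; rewrite h22 h52 h12 h42 mulrA.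
have Hx := svalP x; have Hy := svalP y; have Hz := svalP z.
have Hxy : sval x * sval y \in X by case: (hwd _ _ Hx Hy).
have Hyz : sval y * sval z \in X by case: (hwd _ _ Hy Hz).
have Hxyz : sval x * sval y * sval z \in X by case: (hwd _ _ Hxy Hz).
have n1 := nz _ Hyz. have n2 := nz _ Hxyz. have n3 := nz _ Hxy. have n4 := nz _ Hy.
have ab : sval p2 * sval p1 = sval x * sval y * (f (sval z) / f (sval x * sval y * sval z)).
  rewrite h21 h11 h12 !mulrA; field; by rewrite n1 n2.
have e3 : q3 = p5.
  apply: val_inj => /=; rewrite h32 h51 h42 ab.
  by rewrite mulrA.
have e4 : p3 = p4.
  apply: val_inj => /=; rewrite h31 h41 ab h21 h11 h12.
  have F1 := hf _ _ Hy Hz. have F2 := hf _ _ Hxy Hz.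
  have -> : f (sval y * (f (sval z) / f (sval y * sval z))) = f (sval y) / f (sval y * sval z).
    by rewrite -F1 mulfK.
  have -> : f (sval x * sval y * (f (sval z) / f (sval x * sval y * sval z)))
     = f (sval x * sval y) / f (sval x * sval y * sval z).
    by rewrite -F2 mulfK.
  rewrite !mulrA; field; rewrite ?n1 ?n2 ?n3 ?n4 //.
by rewrite eq2 e3 e4.
Qed.
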